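(* Let $G$ be a finite group, let $\mathscr{F}$ be a family of subgroups of $G$, and let $p\in\mathbb{Z}$ be a prime or $0$. The ideal $\mathcal{P}_{\mathscr{F},p}$ of $\mathrm{Gh}(\underline{A}_G)$ is prime if and only if $\mathcal{P}_{\mathscr{F},p}=\mathcal{P}_{H,p}$ for some $H\le G$.
   Context: Let $G$ be a finite group. For $H\le G$, $\widetilde{A}(H)$ is the subring of $\prod_{I\le H}\mathbb{Z}$ of tuples $(a_I)_{I\le H}$ with $a_{hIh^{-1}}=a_I$ for $h\in H$. $\mathrm{Gh}(\underline{A}_G)$ is the $G$-Tambara functor with $\mathrm{Gh}(\underline{A}_G)(G/H)=\widetilde{A}(H)$ and, for $H\le K$, $g\in G$, $I^g=g^{-1}Ig$: $\mathrm{res}^K_H(b)_L=b_L$; $\mathrm{tr}^K_H(a)_I=\sum_{kH\in K/H,\ I^k\le H}a_{I^k}$; $\mathrm{nm}^K_H(a)_I=\prod_{IgH\in I\backslash K/H}a_{I^g\cap H}$; $c_{g,H}(a)_J=a_{J^g}$ for $J\le gHg^{-1}$. A family of subgroups is a nonempty set of subgroups of $G$ closed under conjugation and passing to subgroups. For a family $\mathscr{F}$ and $p$ a prime or $0$, $\mathcal{P}_{\mathscr{F},p}$ is the ideal with $\mathcal{P}_{\mathscr{F},p}(G/H)=\prod_{I\le H}\delta(I)\mathbb{Z}\cap\widetilde{A}(H)$, where $\delta(I)=p$ if $I\in\mathscr{F}$ and $\delta(I)=1$ otherwise. For $H\le G$, $\mathcal{P}_{H,p}=\mathcal{P}_{\mathscr{F}_H,p}$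 with $\mathscr{F}_H=\{I\le G: I\preccurlyeq_G H\}$ (subgroups conjugate to a subgroup of $H$). A Tambara ideal $\mathcal{I}$ is a collection of ideals $\mathcal{I}(G/H)$ closed under all restrictions, transfers, norms and conjugations; it is prime (Nakaoka) if $\mathcal{I}\neq T$ and whenever $a\in T(G/K_1)$, $b\in T(G/K_2)$ satisfy $\big(\mathrm{nm}^L_{g_1H_1g_1^{-1}}c_{g_1,H_1}\mathrm{res}^{K_1}_{H_1}(a)\big)\big(\mathrm{nm}^L_{g_2H_2g_2^{-1}}c_{g_2,H_2}\mathrm{res}^{K_2}_{H_2}(b)\big)\in\mathcal{I}(G/L)$ for all $L,H_1,H_2\le G$, $g_1,g_2\in G$ with $H_i\le K_i$, $g_iH_ig_i^{-1}\le L$, then $a\in\mathcal{I}(G/K_1)$ or $b\in\mathcal{I}(G/K_2)$. *)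

(* Defs.v *)
(* The finite group G is the whole finGroupType gT
   (every finite group is one); subgroups of G are elements of {group gT}. *)
From HB Require Import structures.
From mathcomp Require Import all_boot all_order all_algebra all_fingroup.
Set Implicit Arguments. Unset Strict Implicit. Unset Printing Implicit Defensive.
Import GRing.Theory Num.Theory.

Section GhostTambara.
Variable gT : finGroupType.

(* An element of Gh(A_G)(G/K) = tilde A(K) is represented by a function
   a : {group gT} -> int whose value a I is the coordinate a_I for I <= K,
   normalised to 0 for I not contained in K, and invariant under conjugation
   by elements of K.  Note: in MathComp  I :^ h = h^-1 I h. *)
Definition ghostTuple := {group gT} -> int.

Definition in_ghost (K : {group gT}) (a : ghostTuple) : Prop :=
  (forall I : {group gT}, ~~ (I \subset K) -> a I = 0%R) /\
  (forall (I : {group gT}) (h : gT), I \subset K -> h \in K ->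
     a (I :^ h)%G = a I).

Definition gh_res (H : {group gT}) (b : ghostTuple) : ghostTuple :=
  fun L => if L \subset H then b L else 0%R.

Definition gh_tr (K H : {group gT}) (a : ghostTuple) : ghostTuple :=
  fun I => if I \subset K then
     (\sum_(C in lcosets H K | (I :^ repr C)%g \subset H) a (I :^ repr C)%G)%R
   else 0%R.

(* nm^K_H (a)_I = prod_{I g H in I\K/H} a_{I^g cap H}  for I <= K *)
Definition gh_nm (K H : {group gT}) (a : ghostTuple) : ghostTuple :=
  fun I => if I \subset K then
     (\prod_(D in [set ((I :* g) * H)%g | g in K])
         a (I :^ repr D :&: H)%G)%R
   else 0%R.

(* c_{g,H}(a)_J = a_{J^g}  for J <= g H g^-1 = H :^ g^-1 *)
Definition gh_conj (g : gT) (H : {group gT}) (a : ghostTuple) : ghostTuple :=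
  fun J => if J \subset (H :^ g^-1)%g then a (J :^ g)%G else 0%R.

Definition ghostIdeal := {group gT} -> ghostTuple -> Prop.

Definition nakaoka_prime (P : ghostIdeal) : Prop :=
  (exists (K : {group gT}) (a : ghostTuple), in_ghost K a /\ ~ P K a) /\
  (forall (K1 K2 : {group gT}) (a b : ghostTuple),
     in_ghost K1 a -> in_ghost K2 b ->
     (forall (L H1 H2 : {group gT}) (g1 g2 : gT),
        H1 \subset K1 -> H2 \subset K2 ->
        (H1 :^ g1^-1)%g \subset L -> (H2 :^ g2^-1)%g \subset L ->
        P L (fun I =>
          (gh_nm L (H1 :^ g1^-1)%G (gh_conj g1 H1 (gh_res H1 a)) I *
           gh_nm L (H2 :^ g2^-1)%G (gh_conj g2 H2 (gh_res H2 b)) I)%R)) ->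
     P K1 a \/ P K2 b).

Definition is_family (F : {set {group gT}}) : Prop :=
  F != set0 /\
  (forall (I : {group gT}) (g : gT), I \in F -> (I :^ g)%G \in F) /\
  (forall I J : {group gT}, J \subset I -> I \in F -> J \in F).

Definition P_fam (F : {set {group gT}}) (p : nat) : ghostIdeal :=
  fun K a => in_ghost K a /\
    (forall I : {group gT}, I \subset K -> I \in F -> (p%:Z %| a I)%Z).

Definition fam_of (H : {group gT}) : {set {group gT}} :=
  [set I : {group gT} | [exists g : gT, (I :^ g)%g \subset H]].

Definition P_sub (H : {group gT}) (p : nat) : ghostIdeal :=
  P_fam (fam_of H) p.

End GhostTambara.

(* Main.v *)
Require Import Defs.
From mathcomp Require Import all_boot all_order all_algebra all_fingroup.
From Stdlib Require Import Classical.
Set Implicit Arguments. Unset Strict Implicit. Unset Printing Implicit Defensive.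
Import GRing.Theory Num.Theory.

Lemma xeq (gT : finGroupType) (x : ghostTuple gT) (A B : {group gT}) :
  (A :=: B)%g -> x A = x B.
Proof. by move=> E; congr x; apply: val_inj. Qed.

Lemma dcoset_val (gT : finGroupType) (H J : {group gT}) (x : ghostTuple gT) g d :
  (forall (Z : {group gT}) k, Z \subset H -> k \in H -> x (Z :^ k)%G = x Z) ->
  d \in ((J :* g) * H)%g -> x (J :^ d :&: H)%G = x (J :^ g :&: H)%G.
Proof.
move=> xinv /mulsgP[y k /rcosetP[j jJ ->] kH ->].
rewrite -(xinv (J :^ g :&: H)%G k) ?subsetIr //.
apply: xeq => /=.
by rewrite !conjsgM (conjGid jJ) conjIg (conjGid kH).
Qed.

Lemma nm_conj (gT : finGroupType) (L H : {group gT}) (x : ghostTuple gT) :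
  (forall (Z : {group gT}) k, Z \subset H -> k \in H -> x (Z :^ k)%G = x Z) ->
  forall (J : {group gT}) h, J \subset L -> h \in L ->
  gh_nm L H x (J :^ h)%G = gh_nm L H x J.
Proof.
move=> xinv J h JL hL; rewrite /gh_nm /= JL.
have ->: (J :^ h \subset L)%g by rewrite -(conjGid hL) conjSg.
have ES : [set ((J :^ h :* g) * H)%g | g in L] =
          [set ((h^-1 *: D)%g : {set gT}) | D in [set ((J :* g) * H)%g | g in L]].
  apply/setP=> D; apply/imsetP/imsetP.
  - case=> g gL ->; exists ((J :* (h * g)) * H)%g.
      by apply/imsetP; exists (h * g)%g; rewrite ?groupM.
    by rewrite conjsgE rcosetM !mulgA.
  - case=> D0 /imsetP[g gL ->] ->; exists (h^-1 * g)%g; first by rewrite groupM ?groupV.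
    by rewrite conjsgE !rcosetM -!mulgA lcosetKV.
rewrite ES big_imset /=; last by move=> D1 D2 _ _; apply: lcoset_inj.
apply: eq_bigr => D /imsetP[g gL ->].
have gD : g \in ((J :* g) * H)%g.
  by apply/mulsgP; exists g 1%g; rewrite ?group1 ?mulg1 //; apply/rcosetP; exists 1%g; rewrite ?mul1g.
set D' := (h^-1 *: ((J :* g) * H))%g.
rewrite (@xeq _ x _ (J :^ (h * repr D') :&: H)%G); last by rewrite /= conjsgM.
rewrite (@dcoset_val _ H J x g) //; last first.
  have: repr (h^-1 *: ((J :* g) * H))%g \in (h^-1 *: ((J :* g) * H))%g.
    by apply: (mem_repr (h^-1 * g)%g); rewrite mem_lcoset invgK mulKVg.
  by rewrite mem_lcoset invgK.
by rewrite (@dcoset_val _ H J x g) // (mem_repr _ gD).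
Qed.

Lemma conj_res_inv (gT : finGroupType) (K H : {group gT}) g (a : ghostTuple gT) :
  in_ghost K a -> H \subset K ->
  forall (Z : {group gT}) k, Z \subset (H :^ g^-1)%G -> k \in (H :^ g^-1)%G ->
  gh_conj g H (gh_res H a) (Z :^ k)%G = gh_conj g H (gh_res H a) Z.
Proof.
move=> [_ ainv] HK Z k ZH kH; rewrite /gh_conj /gh_res /= ZH.
have ->: (Z :^ k \subset H :^ g^-1)%g.
  by rewrite -(conjGid kH) conjSg.
have ZgH : (Z :^ g \subset H)%g by rewrite -(conjsgKV g H) conjSg.
have kgH : (k ^ g \in H)%g by rewrite -(conjsgKV g H) memJ_conjg.
have ->: ((Z :^ k) :^ g \subset H)%g.
  by rewrite -conjsgM conjgC conjsgM -(conjGid kgH) conjSg.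
rewrite ZgH -(ainv (Z :^ g)%G (k ^ g)%g) ?(subset_trans ZgH) ?(subsetP HK) //.
by apply: xeq => /=; rewrite -!conjsgM conjgC.
Qed.

Lemma nm_top (gT : finGroupType) (L H : {group gT}) (x : ghostTuple gT) :
  H \subset L -> gh_nm L H x L = x H.
Proof.
move=> HL; rewrite /gh_nm subxx.
have ->: [set ((L :* g) * H)%g | g in L] = [set (L : {set gT})].
  apply/setP=> D; rewrite inE; apply/imsetP/eqP.
    by case=> g gL ->; rewrite rcoset_id // mulGSid.
  by move=> ->; exists 1%g; rewrite ?group1 // rcoset_id ?group1 // mulGSid.
rewrite big_set1; apply: xeq => /=.
by rewrite repr_group conjsg1; apply/setIidPr.
Qed.

Lemma nm_nonzero (gT : finGroupType) (L H J : {group gT}) (x : ghostTuple gT) :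
  gh_nm L H x J != 0%R -> exists d, x (J :^ d :&: H)%G != 0%R.
Proof.
rewrite /gh_nm; case: ifP => _; first last.
  by rewrite eqxx.
have D0 : ((J :* 1) * H)%g \in [set ((J :* g) * H)%g | g in L].
  by apply/imsetP; exists 1%g.
rewrite (bigD1 _ D0) //= mulf_eq0 negb_or => /andP[nz _].
by exists (repr ((J :* 1) * H))%g.
Qed.

Lemma dvdz_primeM (p : nat) (m n : int) : prime p \/ p = 0 ->
  (p%:Z %| (m * n)%R)%Z -> (p%:Z %| m)%Z \/ (p%:Z %| n)%Z.
Proof.
rewrite !dvdzE abszM /= => [[pr|->]].
  by rewrite Euclid_dvdM //; case/orP; [left|right].
by rewrite !dvd0n muln_eq0; case/orP; [left|right].
Qed.

Lemma ndvdz1 (p : nat) : prime p \/ p = 0 -> ~ (p%:Z %| 1)%Z.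
Proof.
rewrite dvdzE /= dvdn1 => [[pr|->]] //.
by move/eqP=> e; rewrite e in pr.
Qed.

Lemma nakaoka_ext (gT : finGroupType) (P Q : ghostIdeal gT) :
  (forall K a, P K a <-> Q K a) -> nakaoka_prime P -> nakaoka_prime Q.
Proof.
move=> E [[K0 [a0 [a0K nP]]] pr]; split.
  by exists K0, a0; split => //; rewrite -E.
move=> K1 K2 a b aK bK hyp.
have := pr K1 K2 a b aK bK.
rewrite !E; apply=> *; rewrite E; exact: hyp.
Qed.

Lemma conj_res_top (gT : finGroupType) (I : {group gT}) u (a : ghostTuple gT) :
  gh_conj u^-1 I (gh_res I a) (I :^ u^-1^-1)%G = a I.
Proof.
have e1 : ((I :^ u^-1^-1) :^ u^-1 = I)%g := conjsgKV _ _.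
rewrite /gh_conj /gh_res /= subxx e1 subxx.
exact: xeq.
Qed.

Lemma witness (gT : finGroupType) (F : {set {group gT}}) p K a :
  in_ghost K a -> ~ P_fam F p K a ->
  exists I : {group gT}, [/\ I \subset K, I \in F & ~ (p%:Z %| a I)%Z].
Proof.
move=> aK na; apply: NNPP => ne; apply: na; split => // I IK IF.
apply: NNPP => nd; apply: ne; by exists I.
Qed.

Lemma prime_sub (gT : finGroupType) (H : {group gT}) p :
  prime p \/ p = 0 -> nakaoka_prime (P_sub H p).
Proof.
move=> pp; split.
  exists [set: gT]%G, (fun _ => 1%R); split.
    by split=> // I; rewrite subsetT.
  case=> _ /(_ 1%G (sub1G _)) h; apply: (ndvdz1 pp); apply: h.
  by rewrite inE; apply/existsP; exists 1%g; rewrite conjs1g sub1G.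
move=> K1 K2 a b aK bK hyp.
apply: NNPP => /not_or_and [na nb].
have [I1 [I1K I1F nd1]] := witness aK na.
have [I2 [I2K I2F nd2]] := witness bK nb.
move: I1F; rewrite inE => /existsP[u1 u1H].
move: I2F; rewrite inE => /existsP[u2 u2H].
have s1 : ((I1 :^ invg (invg u1))%G \subset H) by rewrite /= invgK.
have s2 : ((I2 :^ invg (invg u2))%G \subset H) by rewrite /= invgK.
have [_ /(_ H (subxx _))] := hyp H I1 I2 (u1^-1)%g (u2^-1)%g I1K I2K s1 s2.
rewrite (nm_top _ s1) (nm_top _ s2) !conj_res_top.
have HH : H \in fam_of H by rewrite inE; apply/existsP; exists 1%g; rewrite conjsg1.
by move=> /(_ HH) /(dvdz_primeM pp) [].
Qed.

Lemma key (gT : finGroupType) (F : {set {group gT}}) p :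
  is_family F -> prime p \/ p = 0 -> nakaoka_prime (P_fam F p) ->
  forall M1 M2 : {group gT}, M1 \in F -> M2 \in F ->
  (forall Y : {group gT}, Y \in F -> M1 \subset Y -> #|Y| <= #|M1|) ->
  (forall Y : {group gT}, Y \in F -> M2 \subset Y -> #|Y| <= #|M2|) ->
  exists c, (M1 :^ c)%g = M2.
Proof.
move=> [_ [Fc Fs]] pp [_ pr] M1 M2 M1F M2F mx1 mx2.
apply: NNPP => nc.
pose ind (M : {group gT}) : ghostTuple gT := fun Z => if (Z :==: M) then 1%R else 0%R.
have indG M : in_ghost M (ind M).
  split => [Z ZM|Z h ZM hM]; rewrite /ind.
    by case: eqP => // E; move: ZM; rewrite E subxx.
  by rewrite /= -{1}(conjGid hM) (inj_eq (@conjsg_inj _ h)).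
have indN (M : {group gT}) : M \in F -> ~ P_fam F p M (ind M).
  move=> MF [_ /(_ M (subxx _) MF)]; rewrite /ind eqxx; exact: ndvdz1.
have hit (M H1 L J : {group gT}) g1 :
  gh_nm L (H1 :^ invg g1)%G (gh_conj g1 H1 (gh_res H1 (ind M))) J != 0%R ->
  exists c, (M \subset J :^ c)%g.
  move/nm_nonzero => [d]; rewrite /gh_conj /gh_res /=.
  case: ifP => // _; case: ifP => // _; rewrite /ind; case: ifP => // /eqP E _.
  by exists (d * g1)%g; rewrite -E /= conjsgM conjSg subsetIl.
have conjM (M J : {group gT}) c : M \in F ->
  (forall Y : {group gT}, Y \in F -> M \subset Y -> #|Y| <= #|M|) ->
  (M \subset J :^ c)%g -> J \in F -> (J :^ c)%g = M.
  move=> MF mx MJ JF.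
  have JcF := Fc J c JF.
  have := mx _ JcF MJ => le.
  by apply/esym/eqP; rewrite eqEcard MJ le.
have hyp : forall (L H1 H2 : {group gT}) (g1 g2 : gT),
    H1 \subset M1 -> H2 \subset M2 ->
    (H1 :^ g1^-1)%g \subset L -> (H2 :^ g2^-1)%g \subset L ->
    P_fam F p L (fun I =>
      (gh_nm L (H1 :^ g1^-1)%G (gh_conj g1 H1 (gh_res H1 (ind M1))) I *
       gh_nm L (H2 :^ g2^-1)%G (gh_conj g2 H2 (gh_res H2 (ind M2))) I)%R).
  move=> L H1 H2 g1 g2 H1M H2M s1 s2; split.
    split.
      by move=> I nIL; rewrite /gh_nm (negbTE nIL) mul0r.
    move=> I h IL hL.
    rewrite (nm_conj (@conj_res_inv gT M1 H1 g1 (ind M1) (indG M1) H1M) IL hL).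
    by rewrite (nm_conj (@conj_res_inv gT M2 H2 g2 (ind M2) (indG M2) H2M) IL hL).
  move=> J JL JF.
  case: (boolP (p%:Z %| _)%Z) => // nd; exfalso.
  have [nz1 nz2] :
     gh_nm L (H1 :^ g1^-1)%G (gh_conj g1 H1 (gh_res H1 (ind M1))) J != 0%R /\
     gh_nm L (H2 :^ g2^-1)%G (gh_conj g2 H2 (gh_res H2 (ind M2))) J != 0%R.
    by split; apply/eqP => E; move: nd; rewrite E ?mul0r ?mulr0 dvdz0.
  have [c1 /conjM E1] := hit _ _ _ _ _ nz1.
  have [c2 /conjM E2] := hit _ _ _ _ _ nz2.
  apply: nc; exists (c1^-1 * c2)%g.
  by rewrite -(E1 M1F mx1 JF) -conjsgM mulKVg (E2 M2F mx2 JF).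
by case: (pr _ _ _ _ (indG M1) (indG M2) hyp) => /indN; apply.
Qed.

Theorem theorem4p2 (gT : finGroupType) (F : {set {group gT}}) (p : nat) :
  is_family F -> (prime p \/ p = 0) ->
  (nakaoka_prime (P_fam F p) <->
   exists H : {group gT},
     forall (K : {group gT}) (a : ghostTuple gT),
       P_fam F p K a <-> P_sub H p K a).
Proof.
move=> fam pp; split; last first.
  case=> H E; apply: (@nakaoka_ext _ (P_sub H p)); last exact: prime_sub.
  by move=> K a; apply: iff_sym.
move=> np; have [F0 [Fc Fs]] := fam.
have [Y0 Y0F] := set0Pn _ F0.
case: (@arg_maxnP _ Y0 [pred Y : {group gT} | Y \in F] (fun Y => #|Y|)) => //.
move=> M MF Mmax; exists M.
suff E : F = fam_of M by move=> K a; rewrite /P_sub -E.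
apply/setP => I; rewrite inE; apply/idP/existsP.
  move=> IF.
  case: (@arg_maxnP _ I [pred Y : {group gT} | (Y \in F) && (I \subset Y)]
           (fun Y => #|Y|)); first by rewrite /= IF subxx.
  move=> M2 /andP[M2F IM2] M2max.
  have [c Ec] := key fam pp np MF M2F (fun Y YF _ => Mmax Y YF)
    (fun Y YF M2Y => M2max Y (introT andP (conj YF (subset_trans IM2 M2Y)))).
  by exists c^-1%g; rewrite -(conjsgK c M) conjSg Ec.
case=> g IgM.
have IgF : (I :^ g)%G \in F by apply: Fs IgM MF.
have := Fc _ g^-1%g IgF.
have -> : ((I :^ g)%G :^ g^-1)%G = I by apply: val_inj; rewrite /= conjsgK.
by [].
Qed.
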